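(* Let $R$ be a ring with a separated Zariskian filtration $w:R\to\mathbb{Z}\cup\{\infty\}$, with Rees ring $\tilde R$, maps $\rho_1,\rho_2$, Ore sets $T$, $S$, $\tilde S$ and localisation map $\alpha$ as described in the context, and assume $sr\neq0$ for all $s\in S$ and nonzero $r\in R$. Then $\rho_1$ and $\rho_2$ extend to ring homomorphisms $\rho_1:\tilde S^{-1}\tilde R\to S^{-1}R$, $\tilde s^{-1}\tilde r\mapsto\rho_1(\tilde s)^{-1}\rho_1(\tilde r)$, and $\rho_2:\tilde S^{-1}\tilde R\to T^{-1}\mathrm{gr}_w(R)$, $\tilde s^{-1}\tilde r\mapsto \alpha(\rho_2(\tilde s))^{-1}\alpha(\rho_2(\tilde r))$, with kernels $(t-1)\tilde S^{-1}\tilde R$ and $t\tilde S^{-1}\tilde R$ respectively, and $\rho_2$ is graded.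
   Context: The filtration $w$ is descending with level sets $F_nR=\{r:w(r)\geq n\}$ and $\mathrm{gr}_w(R)=\bigoplus_nF_nR/F_{n+1}R$; for $r\ne0$, $\mathrm{gr}(r)=r+F_{w(r)+1}R$. The Rees ring is the graded ring $\tilde R=\bigoplus_{n\in\mathbb{Z}}F_nR\cdot t^{-n}$ with $(at^{-n})(bt^{-m})=abt^{-(n+m)}$, the element $rt^{-n}$ ($r\in F_nR$) having degree $n$; $t=1\cdot t^{1}$ is a central element of degree $-1$. Zariskian means $\tilde R$ is Noetherian and $F_1R$ is contained in the Jacobson radical of $F_0R$. $\rho_1:\tilde R\to R$ is the ring homomorphism $\sum r_nt^{-n}\mapsto\sum r_n$ and $\rho_2:\tilde R\to\mathrm{gr}_w(R)$ the graded homomorphism $rt^{-n}\mapsto r+F_{n+1}R$. $T$ is a multiplicatively closed, left Ore set of homogeneous elements of $\mathrm{gr}_w(R)$, $\alpha:\mathrm{gr}_w(R)\to T^{-1}\mathrm{gr}_w(R)$ the localisation map, $S=\{r\in R:\mathrm{gr}(r)\in T\}$ and $\tilde S=\{s\in\tilde R: s\text{ homogeneous},\ \rho_2(s)\in T\}$; $S$ and $\tilde S$ are left Ore sets in $R$ and $\tilde R$. Under the stated assumption $R\subseteq S^{-1}R$ and $\tilde R\subseteq\tilde S^{-1}\tilde R$, and $\tilde S^{-1}\tilde R$ is graded with degree-$n$ part $\{\tilde s^{-1}\tilde r:\tilde r\text{ homogeneous},\ \deg\tilde r-\deg\tilde s=n\}$. *)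

(* Defs.v *)
From HB Require Import structures.
From mathcomp Require Import all_boot all_order all_algebra.

Set Implicit Arguments.
Unset Strict Implicit.
Unset Printing Implicit Defensive.

Import Order.TTheory GRing.Theory Num.Theory.
Local Open Scope ring_scope.

(* Filtrations w : R -> Z ∪ {oo}, encoded as option int (None = oo).    *)

Definition geo (n : int) (x : option int) : bool :=
  if x is Some m then (n <= m) else true.

Definition Fil (R : ringType) (w : R -> option int) (n : int) : R -> bool :=
  fun r => geo n (w r).

Definition is_filtration (R : ringType) (w : R -> option int) : Prop :=
  [/\ forall n, Fil w n 0,
      forall n a b, Fil w n a -> Fil w n b -> Fil w n (a - b),
      forall n m a b, Fil w n a -> Fil w m b -> Fil w (n + m) (a * b)
    & Fil w 0 1].

Definition separated (R : ringType) (w : R -> option int) : Prop :=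
  forall r, w r = None <-> r = 0.

(* gr(r) = r + F_{w(r)+1} R, as an element of gr_w(R) (sigma n r denotes the
   class r + F_{n+1}R in degree n); gr 0 is not used. *)
Definition grr (R G : ringType) (w : R -> option int) (sigma : int -> R -> G)
  (r : R) : G :=
  if w r is Some k then sigma k r else 0.

Definition left_ideal_in (A : ringType) (B : A -> Prop) (I : A -> Prop) : Prop :=
  [/\ forall x, I x -> B x, I 0,
      forall x y, I x -> I y -> I (x - y)
    & forall a x, B a -> I x -> I (a * x)].

Definition right_ideal (A : ringType) (I : A -> Prop) : Prop :=
  [/\ I 0, forall x y, I x -> I y -> I (x - y)
    & forall a x, I x -> I (x * a)].

Definition left_ideal (A : ringType) (I : A -> Prop) : Prop :=
  left_ideal_in (fun _ => True) I.

Definition noetherian (A : ringType) : Prop :=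
  (forall I : nat -> A -> Prop, (forall n, left_ideal (I n)) ->
     (forall n x, I n x -> I n.+1 x) ->
     exists N, forall n x, (N <= n)%N -> I n x -> I N x) /\
  (forall I : nat -> A -> Prop, (forall n, right_ideal (I n)) ->
     (forall n x, I n x -> I n.+1 x) ->
     exists N, forall n x, (N <= n)%N -> I n x -> I N x).

Definition maximal_left_ideal_in (A : ringType) (B : A -> Prop) (I : A -> Prop)
  : Prop :=
  [/\ left_ideal_in B I, ~ I 1 &
      forall J, left_ideal_in B J -> (forall x, I x -> J x) -> ~ J 1 ->
        forall x, J x -> I x].

Definition in_jacobson (A : ringType) (B : A -> Prop) (x : A) : Prop :=
  B x /\ forall I, maximal_left_ideal_in B I -> I x.

(* Rt = ⊕_n F_n R t^{-n}; e n r stands for r t^{-n} (r ∈ F_n R). *)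
Definition is_rees_ring (R Rt : ringType) (w : R -> option int)
  (e : int -> R -> Rt) : Prop :=
  [/\ forall n a b, Fil w n a -> Fil w n b -> e n (a + b) = e n a + e n b,
      forall n a, Fil w n a -> e n a = 0 -> a = 0,
      forall n m a b, Fil w n a -> Fil w m b -> e n a * e m b = e (n + m) (a * b),
      forall x : Rt, exists s : seq (int * R),
        (forall p, p \in s -> Fil w p.1 p.2) /\ x = \sum_(p <- s) e p.1 p.2
    & forall s : seq (int * R), uniq (map fst s) ->
        (forall p, p \in s -> Fil w p.1 p.2) ->
        \sum_(p <- s) e p.1 p.2 = 0 -> forall p, p \in s -> p.2 = 0].

(* G = gr_w R = ⊕_n F_n R / F_{n+1} R; sigma n r stands for r + F_{n+1} R
   in degree n (r ∈ F_n R), multiplication induced from R. *)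
Definition is_assoc_graded (R G : ringType) (w : R -> option int)
  (sigma : int -> R -> G) : Prop :=
  [/\ forall n a b, Fil w n a -> Fil w n b ->
        sigma n (a + b) = sigma n a + sigma n b,
      forall n a, Fil w n a -> (sigma n a = 0 <-> Fil w (n + 1) a),
      forall n m a b, Fil w n a -> Fil w m b ->
        sigma n a * sigma m b = sigma (n + m) (a * b),
      forall x : G, exists s : seq (int * R),
        (forall p, p \in s -> Fil w p.1 p.2) /\ x = \sum_(p <- s) sigma p.1 p.2
    & forall s : seq (int * R), uniq (map fst s) ->
        (forall p, p \in s -> Fil w p.1 p.2) ->
        \sum_(p <- s) sigma p.1 p.2 = 0 ->
        forall p, p \in s -> sigma p.1 p.2 = 0].

Definition rees_deg (R Rt : ringType) (w : R -> option int)
  (e : int -> R -> Rt) (n : int) (x : Rt) : Prop :=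
  exists2 a, Fil w n a & x = e n a.

Definition gr_deg (R G : ringType) (w : R -> option int)
  (sigma : int -> R -> G) (n : int) (x : G) : Prop :=
  exists2 a, Fil w n a & x = sigma n a.

Definition zariskian (R Rt : ringType) (w : R -> option int) : Prop :=
  noetherian Rt /\ forall x, Fil w 1 x -> in_jacobson (Fil w 0) x.

Definition mult_closed (A : ringType) (T : A -> Prop) : Prop :=
  T 1 /\ forall x y, T x -> T y -> T (x * y).

Definition left_ore (A : ringType) (T : A -> Prop) : Prop :=
  forall (a s : A), T s -> exists s' a', T s' /\ s' * a = a' * s.

Definition left_ring_of_fractions (A : ringType) (S : A -> Prop)
  (Q : unitRingType) (iota : {rmorphism A -> Q}) : Prop :=
  [/\ forall s, S s -> iota s \is a GRing.unit,
      forall q : Q, exists s a, S s /\ q = (iota s)^-1 * iota a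
    & forall a, iota a = 0 <-> exists2 s, S s & s * a = 0].

(* Main.v *)
Require Import Defs.
From HB Require Import structures.
From mathcomp Require Import all_boot all_order all_algebra.
From mathcomp Require Import zify.
From Stdlib Require Import ClassicalEpsilon.
Import Order.TTheory GRing.Theory Num.Theory.
Local Open Scope ring_scope.

Set Implicit Arguments.
Unset Strict Implicit.
Unset Printing Implicit Defensive.
Set Warnings "-notation-overridden,-ambiguous-paths,-deprecated".
Definition liftf (A : ringType) (S : A -> Prop) (Q : unitRingType) (iota : A -> Q)
  (B : unitRingType) (f : A -> B) (q : Q) : B :=
  epsilon (inhabits 0) (fun b => exists s a,
     [/\ S s, q = (iota s)^-1 * iota a & b = (f s)^-1 * f a]).

Lemma ore_common (A : ringType) (S : A -> Prop) (Q : unitRingType)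
  (iota : {rmorphism A -> Q}) :
  mult_closed S -> left_ring_of_fractions S iota ->
  forall s1 s2, S s1 -> S s2 -> exists c d, S c /\ c * s2 = d * s1.
Proof.
move=> [S1 SM] [Su Ssurj Sker] s1 s2 h1 h2.
have [u [v [hu hq]]] := Ssurj (iota s2 * (iota s1)^-1).
have e1 : iota (u * s2 - v * s1) = 0.
  rewrite rmorphB !rmorphM /=.
  have -> : iota v = iota u * (iota s2 * (iota s1)^-1) by rewrite hq mulVKr // Su.
  by rewrite -mulrA divrK ?Su // subrr.
have [z hz hz0] := (Sker _).1 e1.
exists (z * u), (z * v); split; first exact: SM.
by apply/eqP; rewrite -subr_eq0 -!mulrA -mulrBr hz0.
Qed.

Lemma ker_transfer (A : ringType) (S : A -> Prop) (Q : unitRingType)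
  (iota : {rmorphism A -> Q}) (B : unitRingType) (f : {rmorphism A -> B}) :
  left_ring_of_fractions S iota -> (forall s, S s -> f s \is a GRing.unit) ->
  forall x, iota x = 0 -> f x = 0.
Proof.
move=> [Su Ssurj Sker] fu x hx.
have [z hz hz0] := (Sker _).1 hx.
have : f z * f x = 0 by rewrite -rmorphM hz0 rmorph0.
by move/(congr1 (fun y => (f z)^-1 * y)); rewrite mulKr ?fu // mulr0.
Qed.

Lemma frac_wd (A : ringType) (S : A -> Prop) (Q : unitRingType)
  (iota : {rmorphism A -> Q}) (B : unitRingType) (f : {rmorphism A -> B}) :
  mult_closed S -> left_ring_of_fractions S iota ->
  (forall s, S s -> f s \is a GRing.unit) ->
  forall s a s' a', S s -> S s' -> (iota s)^-1 * iota a = (iota s')^-1 * iota a' ->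
  (f s)^-1 * f a = (f s')^-1 * f a'.
Proof.
move=> Smc Slrf fu s a s' a' hs hs' heq.
have Slrf' := Slrf; case: Slrf' => [Su Ssurj Sker].
have [c [d [hc hcd]]] := ore_common Smc Slrf hs hs'.
have e1 : iota (c * a' - d * a) = 0.
  rewrite rmorphB !rmorphM.
  have -> : iota a' = iota s' * ((iota s)^-1 * iota a) by rewrite heq mulVKr ?Su.
  by rewrite (mulrA (iota c)) -(rmorphM _ c s') hcd rmorphM -mulrA mulVKr ?Su // subrr.
have e2 : f c * f a' = f d * f a.
  by apply/eqP; rewrite -subr_eq0 -!rmorphM -rmorphB (ker_transfer Slrf fu e1).
have e3 : f c * f s' = f d * f s by rewrite -!rmorphM hcd.
have ud : f d \is a GRing.unit.
  by rewrite -(unitrMl _ (fu _ hs)) -e3 (unitrMl _ (fu _ hs')) fu.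
have -> : f a' = (f c)^-1 * (f d * f a) by rewrite -e2 mulKr ?fu.
rewrite mulrA -invrM ?fu // e3 (invrM ud (fu _ hs)).
by rewrite -mulrA (mulKr ud).
Qed.

Lemma liftf_frac (A : ringType) (S : A -> Prop) (Q : unitRingType)
  (iota : {rmorphism A -> Q}) (B : unitRingType) (f : {rmorphism A -> B}) :
  mult_closed S -> left_ring_of_fractions S iota ->
  (forall s, S s -> f s \is a GRing.unit) ->
  forall s a, S s -> liftf S iota f ((iota s)^-1 * iota a) = (f s)^-1 * f a.
Proof.
move=> Smc Slrf fu s a hs; rewrite /liftf.
set P := fun b => _.
have hP : exists b, P b by exists ((f s)^-1 * f a), s, a.
have [s' [a' [hs' heq ->]]] := epsilon_spec (inhabits 0) P hP.
by symmetry; apply: (frac_wd Smc Slrf fu).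
Qed.

Lemma lift_exists (A : ringType) (S : A -> Prop) (Q : unitRingType)
  (iota : {rmorphism A -> Q}) (B : unitRingType) (f : {rmorphism A -> B}) :
  mult_closed S -> left_ring_of_fractions S iota ->
  (forall s, S s -> f s \is a GRing.unit) ->
  exists F : {rmorphism Q -> B},
    forall s a, S s -> F ((iota s)^-1 * iota a) = (f s)^-1 * f a.
Proof.
move=> Smc Slrf fu.
have Slrf' := Slrf; case: Slrf' => [Su Ssurj Sker].
have Smc' := Smc; case: Smc' => [S1 SM].
pose F := liftf S iota f.
have Ffr : forall s a, S s -> F ((iota s)^-1 * iota a) = (f s)^-1 * f a.
  exact: liftf_frac.
have Fsub : {morph F : x y / x - y}.
  move=> q1 q2.
  have [s1 [a1 [h1 ->]]] := Ssurj q1.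
  have [s2 [a2 [h2 ->]]] := Ssurj q2.
  have [c [d [hc hcd]]] := ore_common Smc Slrf h1 h2.
  pose m := c * s2.
  have hm : S m by apply: SM.
  have r1 : (iota s1)^-1 * iota a1 = (iota m)^-1 * iota (d * a1).
    have : iota m * ((iota s1)^-1 * iota a1) = iota (d * a1).
      by rewrite /m hcd !rmorphM -mulrA mulVKr ?Su.
    by move=> <-; rewrite mulKr // Su.
  have r2 : (iota s2)^-1 * iota a2 = (iota m)^-1 * iota (c * a2).
    have : iota m * ((iota s2)^-1 * iota a2) = iota (c * a2).
      by rewrite /m !rmorphM -mulrA mulVKr ?Su.
    by move=> <-; rewrite mulKr // Su.
  by rewrite r1 r2 -mulrBr -rmorphB !Ffr // rmorphB mulrBr.
have Fmul : {morph F : x y / x * y}.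
  move=> q1 q2.
  have [s1 [a1 [h1 ->]]] := Ssurj q1.
  have [s2 [a2 [h2 ->]]] := Ssurj q2.
  have [u [v [hu hq]]] := Ssurj (iota a1 * (iota s2)^-1).
  have -> : (iota s1)^-1 * iota a1 * ((iota s2)^-1 * iota a2)
            = (iota (u * s1))^-1 * iota (v * a2).
    rewrite !rmorphM invrM ?Su // -!mulrA; congr (_ * _).
    by rewrite !mulrA hq.
  have e : iota (u * a1 - v * s2) = 0.
    rewrite rmorphB !rmorphM.
    have -> : iota v = iota u * (iota a1 * (iota s2)^-1) by rewrite hq mulVKr ?Su.
    by rewrite -mulrA divrK ?Su // subrr.
  have e' : f u * f a1 = f v * f s2.
    by apply/eqP; rewrite -subr_eq0 -!rmorphM -rmorphB (ker_transfer Slrf fu e).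
  have hfe : f a1 * (f s2)^-1 = (f u)^-1 * f v.
    apply: (mulrI (fu _ hu)).
    by rewrite mulrA e' mulVKr ?fu // mulrK ?fu.
  rewrite !Ffr //; last exact: SM.
  rewrite !rmorphM invrM ?fu // -!mulrA; congr (_ * _).
  by rewrite !mulrA hfe.
have F1 : F 1 = 1.
  have -> : (1 : Q) = (iota 1)^-1 * iota 1 by rewrite rmorph1 invr1 mulr1.
  by rewrite Ffr // rmorph1 invr1 mulr1.
exists (HB.pack_for (GRing.RMorphism.type Q B) F (GRing.isZmodMorphism.Build Q B F Fsub)
          (GRing.isMonoidMorphism.Build Q B F (F1, Fmul))).
by move=> s a hs /=; apply: Ffr.
Qed.
Lemma Fil_mono (R : ringType) (w : R -> option int) n m a :
  Fil w n a -> m <= n -> Fil w m a.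
Proof. by rewrite /Fil /geo; case: (w a) => // k hk hmn; exact: le_trans hmn hk. Qed.

Lemma Fil_add (R : ringType) (w : R -> option int) :
  is_filtration w -> forall n a b, Fil w n a -> Fil w n b -> Fil w n (a + b).
Proof.
move=> [F0 Fsub _ _] n a b ha hb.
by have := Fsub n a (0 - b) ha (Fsub n 0 b (F0 n) hb); rewrite sub0r opprK.
Qed.

Lemma hom_sum (R : ringType) (M : zmodType) (P : R -> Prop) (h : R -> M) :
  P 0 -> (forall a b, P a -> P b -> P (a + b)) ->
  (forall a b, P a -> P b -> h (a + b) = h a + h b) ->
  forall (s : seq (int * R)) (Q : pred (int * R)),
  (forall p, p \in s -> Q p -> P p.2) ->
  P (\sum_(p <- s | Q p) p.2) /\
  h (\sum_(p <- s | Q p) p.2) = \sum_(p <- s | Q p) h p.2.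
Proof.
move=> P0 Padd hadd s Q; elim: s => [|x s IH] hs.
  rewrite !big_nil; split => //.
  have := hadd 0 0 P0 P0; rewrite addr0 => /(congr1 (fun y => y - h 0)).
  by rewrite subrr addrK => <-.
have [IH1 IH2] := IH (fun p hp hq => hs p ltac:(by rewrite inE hp orbT) hq).
rewrite !big_cons; case: ifP => hq //.
have hx := hs x (mem_head _ _) hq.
by split; [apply: Padd | rewrite hadd // IH2].
Qed.

Lemma big_partition_fst (R : ringType) (M : zmodType) (F : int -> R -> M)
  (s : seq (int * R)) :
  \sum_(p <- s) F p.1 p.2 =
  \sum_(d <- undup (map fst s)) \sum_(p <- s | p.1 == d) F p.1 p.2.
Proof.
symmetry.
under eq_bigr do rewrite big_mkcond.
rewrite exchange_big /=.
apply: eq_big_seq => p hp.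
rewrite (big_rem p.1) /=; last by rewrite mem_undup map_f.
rewrite eqxx big1_seq ?addr0 // => d /andP [_ hd].
case: eqP => // E; move: hd; rewrite -E mem_rem_uniqF ?undup_uniq //.
Qed.

Lemma kerrho1 (R : ringType) (w : R -> option int) (Rt : ringType)
  (e : int -> R -> Rt) (rho1 : {rmorphism Rt -> R}) :
  is_filtration w -> is_rees_ring w e ->
  (forall n a, Fil w n a -> rho1 (e n a) = a) ->
  forall r, rho1 r = 0 -> exists y, r = (e (-1) 1 - 1) * y.
Proof.
move=> Hfil [Hadd Hinj Hm Hspan Huniq] Hrho1.
have Hfil' := Hfil; case: Hfil' => [F0 Fsub Fmul F1].
have Fadd := Fil_add Hfil.
have Fm1 : Fil w (-1) 1 by apply: Fil_mono F1 _.
set t := e (-1) 1.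
have te : forall n a, Fil w n a -> t * e n a = e (n - 1) a.
  by move=> n a ha; rewrite /t Hm // mul1r addrC.
have e0 : forall n, e n 0 = 0.
  move=> n; have := Hadd n 0 0 (F0 n) (F0 n); rewrite addr0.
  by move=> /(congr1 (fun y => y - e n 0)); rewrite subrr addrK => <-.
have single : forall n a (k : nat), Fil w n a ->
    exists y, e (n - k%:Z) a - e n a = (t - 1) * y.
  move=> n a k ha; elim: k => [|k [y hy]].
    by exists 0; rewrite subr0 subrr mulr0.
  exists (e (n - k%:Z) a + y).
  have -> : n - k.+1%:Z = n - k%:Z - 1 by lia.
  rewrite -te; last by apply: Fil_mono ha _; lia.
  by rewrite mulrDr -hy mulrBl mul1r addrA subrK.
have single' : forall n m a, Fil w n a -> m <= n ->
    exists y, e n a - e m a = (t - 1) * y.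
  move=> n m a ha hmn.
  have [k hk] : exists k : nat, m = n - k%:Z by exists (absz (n - m)); lia.
  have [y hy] := single n a k ha.
  by exists (- y); rewrite hk mulrN -hy opprB.
have bound : forall s : seq (int * R), exists m, forall p, p \in s -> m <= p.1.
  elim => [|p s [m hm]]; first by exists 0.
  case: (leP m p.1) => h.
    by exists m => q; rewrite inE => /orP [/eqP -> // | /hm].
  exists p.1 => q; rewrite inE => /orP [/eqP -> // | /hm hq].
  exact: le_trans (ltW h) hq.
have main : forall s m, (forall p, p \in s -> Fil w p.1 p.2 /\ m <= p.1) ->
    Fil w m (\sum_(p <- s) p.2) /\
    exists y, \sum_(p <- s) e p.1 p.2 - e m (\sum_(p <- s) p.2) = (t - 1) * y.
  move=> s m; elim: s => [|p s IH] hs.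
    rewrite !big_nil e0 subrr; split; [exact: F0 | by exists 0; rewrite mulr0].
  have [hp1 hp2] := hs p (mem_head _ _).
  have [IH1 [y1 hy1]] := IH (fun q hq => hs q ltac:(by rewrite inE hq orbT)).
  have hpm := Fil_mono hp1 hp2.
  have [y0 hy0] := single' _ _ _ hp1 hp2.
  rewrite !big_cons Hadd //; split; first exact: Fadd.
  by exists (y0 + y1); rewrite mulrDr -hy0 -hy1 opprD addrACA.
move=> r hr.
have [s [hsF hrs]] := Hspan r.
have [m hm] := bound s.
have [_ [y hy]] := main s m (fun p hp => conj (hsF p hp) (hm p hp)).
have hsum : \sum_(p <- s) p.2 = 0.
  have h : rho1 r = \sum_(p <- s) p.2.
    rewrite hrs rmorph_sum; apply: eq_big_seq => p hp.
    by rewrite Hrho1 // hsF.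
  by rewrite -h.
by exists y; rewrite hrs -hy hsum e0 subr0.
Qed.

Lemma kerrho2 (R : ringType) (w : R -> option int) (Rt : ringType)
  (e : int -> R -> Rt) (G : ringType) (sigma : int -> R -> G)
  (rho2 : {rmorphism Rt -> G}) :
  is_filtration w -> is_rees_ring w e -> is_assoc_graded w sigma ->
  (forall n a, Fil w n a -> rho2 (e n a) = sigma n a) ->
  forall r, rho2 r = 0 -> exists y, r = e (-1) 1 * y.
Proof.
move=> Hfil [Hadd Hinj Hm Hspan Huniq] [Gadd Gzero Gm Gspan Guniq] Hrho2 r hr.
have Hfil' := Hfil; case: Hfil' => [F0 Fsub Fmul F1].
have Fadd := Fil_add Hfil.
have Fm1 : Fil w (-1) 1 by apply: Fil_mono F1 _.
have [s [hsF hrs]] := Hspan r.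
pose u := undup (map fst s).
pose c d := \sum_(p <- s | p.1 == d) p.2.
have hc : forall d, [/\ Fil w d (c d),
    e d (c d) = \sum_(p <- s | p.1 == d) e p.1 p.2 &
    sigma d (c d) = \sum_(p <- s | p.1 == d) sigma p.1 p.2].
  move=> d.
  have hs' : forall p, p \in s -> (fun p => p.1 == d) p -> Fil w d p.2.
    by move=> p hp /eqP <-; exact: hsF.
  have [h1 h2] := hom_sum (h := e d) (F0 d) (Fadd d) (Hadd d) hs'.
  have [_ h3] := hom_sum (h := sigma d) (F0 d) (Fadd d) (Gadd d) hs'.
  split => //; [rewrite /c h2 | rewrite /c h3]; apply: eq_bigr => p /eqP ->//.
have hz : \sum_(d <- u) sigma d (c d) = 0.
  have : rho2 r = \sum_(d <- u) sigma d (c d).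
    rewrite hrs rmorph_sum.
    have -> : \sum_(p <- s) rho2 (e p.1 p.2) = \sum_(p <- s) sigma p.1 p.2.
      by apply: eq_big_seq => p hp; rewrite Hrho2 // hsF.
    rewrite (big_partition_fst sigma); apply: eq_bigr => d _.
    by case: (hc d) => _ _ ->.
  by rewrite hr.
have hall : forall d, d \in u -> sigma d (c d) = 0.
  move=> d hd.
  apply: (Guniq [seq (d, c d) | d <- u] _ _ _ (d, c d) (map_f _ hd)).
  - rewrite -map_comp.
    have -> : map (fst \o (fun d => (d, c d))) u = u by elim: (u) => //= x l ->.
    exact: undup_uniq.
  - by move=> p /mapP [d' _ ->]; case: (hc d').
  - by rewrite big_map.
exists (\sum_(d <- u) e (d + 1) (c d)).
rewrite hrs (big_partition_fst e) mulr_sumr; apply: eq_big_seq => d hd.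
case: (hc d) => h1 h2 _; rewrite -h2.
have hF : Fil w (d + 1) (c d) by apply/(Gzero d (c d) h1).1/hall.
by rewrite Hm // mul1r addrC addrK.
Qed.

Unset Implicit Arguments.
Set Strict Implicit.

Theorem proposition1p3p3
  (R : ringType) (w : R -> option int)
  (Hfil : is_filtration w) (Hsep : separated w)
  (* the Rees ring, with r t^{-n} written e n r *)
  (Rt : ringType) (e : int -> R -> Rt) (Hrees : is_rees_ring w e)
  (Hzar : zariskian Rt w)
  (* the associated graded ring, with r + F_{n+1}R written sigma n r *)
  (G : ringType) (sigma : int -> R -> G) (Hgr : is_assoc_graded w sigma)
  (* rho_1 : sum r_n t^{-n} |-> sum r_n ;  rho_2 : r t^{-n} |-> r + F_{n+1}R *)
  (rho1 : {rmorphism Rt -> R})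
  (Hrho1 : forall n a, Fil w n a -> rho1 (e n a) = a)
  (rho2 : {rmorphism Rt -> G})
  (Hrho2 : forall n a, Fil w n a -> rho2 (e n a) = sigma n a)
  (* T : multiplicatively closed left Ore set of homogeneous elements *)
  (T : G -> Prop)
  (HThom : forall x, T x -> exists n, gr_deg w sigma n x)
  (HTmul : mult_closed T) (HTore : left_ore T)
  (* the localisation alpha : G -> T^{-1} G *)
  (QT : unitRingType) (alpha : {rmorphism G -> QT})
  (Halpha : left_ring_of_fractions T alpha)
  (* S^{-1} R *)
  (QS : unitRingType) (iS : {rmorphism R -> QS})
  (HiS : left_ring_of_fractions
           (fun r => r <> 0 /\ T (grr w sigma r)) iS)
  (* tilde S^{-1} tilde R *)
  (Qt : unitRingType) (it : {rmorphism Rt -> Qt})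
  (Hit : left_ring_of_fractions
           (fun s => (exists n, rees_deg w e n s) /\ T (rho2 s)) it)
  (* assumption: s r <> 0 for s in S and r <> 0 *)
  (Hreg : forall s r, s <> 0 -> T (grr w sigma s) -> r <> 0 -> s * r <> 0) :
  let t := e (-1) 1 in
  exists (p1 : {rmorphism Qt -> QS}) (p2 : {rmorphism Qt -> QT}),
    [/\ forall s r, (exists n, rees_deg w e n s) -> T (rho2 s) ->
          p1 ((it s)^-1 * it r) = (iS (rho1 s))^-1 * iS (rho1 r),
        forall s r, (exists n, rees_deg w e n s) -> T (rho2 s) ->
          p2 ((it s)^-1 * it r) = (alpha (rho2 s))^-1 * alpha (rho2 r),
        forall x, p1 x = 0 <-> exists y, x = (it t - 1) * y,
        forall x, p2 x = 0 <-> exists y, x = it t * y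
      & (* rho_2 is graded *)
        forall (n : int) (x : Qt),
          (exists s r k m, [/\ (exists j, rees_deg w e j s) /\ T (rho2 s),
             rees_deg w e k s, rees_deg w e m r, m - k = n
             & x = (it s)^-1 * it r]) ->
          (exists u g k m, [/\ T u, gr_deg w sigma k u, gr_deg w sigma m g,
             m - k = n & p2 x = (alpha u)^-1 * alpha g])].
Proof.
move=> t.
have Hfil' := Hfil; case: Hfil' => [F0 Fsub Fmul F1].
have Hrees' := Hrees; case: Hrees' => [Hadd Hinj Hm Hspan Huniq].
have Hgr' := Hgr; case: Hgr' => [Gadd Gzero Gm Gspan Guniq].
have Fm1 : Fil w (-1) 1 by apply: Fil_mono F1 _.
have Halpha' := Halpha; case: Halpha' => [Hau Hasurj Haker].
have HiS' := HiS; case: HiS' => [HSu HSsurj HSker].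
have Hit' := Hit; case: Hit' => [Stu Stsurj Stker].
have T0 : ~ T 0 by move=> h0; have := Hau 0 h0; rewrite rmorph0 unitr0.
have one_e : e 0 1 = 1.
  have [s [hsF hs]] := Hspan 1.
  have : e 0 1 * \sum_(p <- s) e p.1 p.2 = \sum_(p <- s) e p.1 p.2.
    rewrite mulr_sumr; apply: eq_big_seq => p hp.
    by rewrite (Hm _ _ _ _ F1 (hsF p hp)) add0r mul1r.
  by rewrite -hs mulr1.
pose St := fun s => (exists n, rees_deg w e n s) /\ T (rho2 s).
have StMC : mult_closed St.
  split.
    split; first by exists 0; exists 1; [exact: F1 | by rewrite one_e].
    by rewrite rmorph1; case: HTmul.
  move=> x y [[n [a ha ->]] hx] [[m [b hb ->]] hy]; split.
    by exists (n + m); exists (a * b); [exact: Fmul | rewrite Hm].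
  by rewrite rmorphM; apply: HTmul.2.
have St_S : forall s, St s -> rho1 s <> 0 /\ T (grr w sigma (rho1 s)).
  move=> s [[n [a ha ->]] hT]; rewrite Hrho1 //; rewrite Hrho2 // in hT.
  have hnF : ~ Fil w (n + 1) a.
    by move=> /(Gzero n a ha).2 h0; apply: T0; rewrite h0 in hT.
  move: ha hnF; rewrite /grr /Fil /geo; case E: (w a) => [k|] // hk hk1.
  have ek : k = n by lia.
  subst k; split => // a0; rewrite a0 in E.
  by have := (Hsep 0).2 erefl; rewrite E.
have fu1 : forall s, St s -> (iS \o rho1)%FUN s \is a GRing.unit.
  by move=> s hs; apply: HSu; apply: St_S.
have fu2 : forall s, St s -> (alpha \o rho2)%FUN s \is a GRing.unit.
  by move=> s [_ hs]; apply: Hau.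
have [p1 hp1] := lift_exists StMC Hit fu1.
have [p2 hp2] := lift_exists StMC Hit fu2.
exists p1, p2.
have tcR : forall x, t * x = x * t.
  move=> x; have [s [hsF ->]] := Hspan x.
  rewrite mulr_sumr mulr_suml; apply: eq_big_seq => p hp.
  by rewrite /t (Hm _ _ _ _ Fm1 (hsF p hp)) (Hm _ _ _ _ (hsF p hp) Fm1) mul1r mulr1 addrC.
have tc : forall q, it t * q = q * it t.
  move=> q; have [s [r [hs ->]]] := Stsurj q.
  have c1 : GRing.comm (it t) (it s) by rewrite /GRing.comm -!rmorphM tcR.
  have c2 : GRing.comm (it t) (it r) by rewrite /GRing.comm -!rmorphM tcR.
  exact: commrM (commrV c1) c2.
have St1 : St 1 := StMC.1.
have p1it : forall r, p1 (it r) = iS (rho1 r).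
  by move=> r; have := hp1 1 r St1; rewrite /= !rmorph1 !invr1 !mul1r.
have p2it : forall r, p2 (it r) = alpha (rho2 r).
  by move=> r; have := hp2 1 r St1; rewrite /= !rmorph1 !invr1 !mul1r.
split.
- by move=> s r hn hT; apply: (hp1 s r (conj hn hT)).
- by move=> s r hn hT; apply: (hp2 s r (conj hn hT)).
- move=> x; split.
  + have [s [r [hs ->]]] := Stsurj x; rewrite hp1 //= => h.
    have h' : iS (rho1 r) = 0.
      by move: h => /(congr1 (fun y => iS (rho1 s) * y)); rewrite mulr0 (mulVKr (fu1 s hs)).
    have [s' [hs'0 hs'T] hs'r] := (HSker _).1 h'.
    have hr0 : rho1 r = 0.
      case: (eqVneq (rho1 r) 0) => // /eqP hne; exfalso; exact: Hreg hs'0 hs'T hne hs'r.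
    have [y hy] := kerrho1 Hfil Hrees Hrho1 hr0.
    rewrite -/t in hy.
    exists ((it s)^-1 * it y).
    have cst : GRing.comm (it s) (it t - 1) := commrB (esym (tc _)) (commr1 _).
    rewrite hy rmorphM rmorphB rmorph1 mulrA [RHS]mulrA.
    by rewrite (commrV (commr_sym cst)).
  + move=> [y ->]; rewrite rmorphM rmorphB rmorph1 p1it /t Hrho1 //.
    by rewrite rmorph1 subrr mul0r.
- move=> x; split.
  + have [s [r [hs ->]]] := Stsurj x; rewrite hp2 //= => h.
    have h' : alpha (rho2 r) = 0.
      by move: h => /(congr1 (fun y => alpha (rho2 s) * y)); rewrite mulr0 (mulVKr (fu2 s hs)).
    have [u hTu hur] := (Haker _).1 h'.
    have [k [b hb hub]] := HThom u hTu.
    pose s'' := e k b.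
    have hs'' : St s'' by split; [exists k; exists b | rewrite /s'' Hrho2 // -hub].
    have h0 : rho2 (s'' * r) = 0 by rewrite rmorphM /s'' Hrho2 // -hub.
    have [y hy] := kerrho2 Hfil Hrees Hgr Hrho2 h0.
    rewrite -/t in hy.
    exists ((it s)^-1 * (it s'')^-1 * it y).
    have hr : it r = (it s'')^-1 * (it t * it y).
      by rewrite -rmorphM -hy rmorphM mulKr // Stu.
    by rewrite hr (mulrA (it t)) (tc ((it s)^-1 * (it s'')^-1)) !mulrA.
  + have sig0 : sigma (-1) 1 = 0 by apply: (Gzero _ _ Fm1).2; rewrite addNr.
    by move=> [y ->]; rewrite rmorphM p2it /t Hrho2 // sig0 rmorph0 mul0r.
- move=> n x [s [r [k [m [hs [a ha hsa] [b hb hrb] hmk ->]]]]].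
  exists (rho2 s), (rho2 r), k, m; split => //.
  + exact: hs.2.
  + by exists a => //; rewrite hsa Hrho2.
  + by exists b => //; rewrite hrb Hrho2.
  + exact: (hp2 s r hs).
Qed.
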